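(* Let $n\ge2$, $R>0$, $\varepsilon>0$, and let $f$ be such that $r^{n-1}f\in L^1((0,R))$. Then the problem $-\varepsilon r^{n-1}\Big(\frac{1}{r^{n-1}}w_r\Big)_r+\frac{1}{n r^{n(n-1)}}w^n=L_f$ in $(0,R)$, $w(0)=w_r(0)=0$, $w_r(R)=\varepsilon R^{n-1}$, has at most one nonnegative classical solution.
   Context: $L_f(s):=\int_0^s t^{n-1}f(t)\,dt$. Subscripts $r$ denote derivatives in $r$. A classical solution is a twice differentiable function on $(0,R)$, continuously differentiable up to the endpoints, satisfying the equation and boundary conditions pointwise. (This problem is satisfied by $w=r^{n-1}u^\varepsilon_r$ for radial vanishing moment approximations $u^\varepsilon$ of the Monge–Ampère equation.) *)

(* Defs.v *)
From HB Require Import structures.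
From mathcomp Require Import all_boot all_order all_algebra.
From mathcomp Require Import all_classical all_reals all_analysis.
Set Implicit Arguments. Unset Strict Implicit. Unset Printing Implicit Defensive.
Import Order.TTheory GRing.Theory Num.Theory.
Import numFieldNormedType.Exports.
Local Open Scope classical_set_scope.
Local Open Scope ring_scope.

Definition Lf (R : realType) (n : nat) (f : R -> R) (s : R) : R :=
  \int[(@lebesgue_measure R)]_(t in `[0, s]) (t ^+ n.-1 * f t).

(* w is a classical solution of
     -eps r^{n-1} (w_r / r^{n-1})_r + w^n / (n r^{n(n-1)}) = L_f  in (0,R),
     w(0) = w_r(0) = 0,  w_r(R) = eps R^{n-1}.
   "Classical": w twice differentiable on (0,R), continuously differentiable up
   to the endpoints: there is dw, continuous on [0,R], which is the derivative
   of w on (0,R), the right derivative of w at 0 and the left derivative at R. *)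
Definition classical_solution (R : realType) (n : nat) (eps Rad : R)
    (f : R -> R) (w : R -> R) : Prop :=
  exists dw : R -> R,
    {within `[0, Rad], continuous w} /\
    {within `[0, Rad], continuous dw} /\
    (forall r, r \in `]0, Rad[ -> derivable w r 1 /\ derive1 w r = dw r) /\
    (fun h => h^-1 * (w h - w 0)) @ 0^'+ --> dw 0 /\
    (fun h => (h - Rad)^-1 * (w h - w Rad)) @ Rad^'- --> dw Rad /\
    (forall r, r \in `]0, Rad[ -> derivable dw r 1) /\
    (forall r, r \in `]0, Rad[ ->
       derivable (fun x => dw x / x ^+ n.-1) r 1 /\
       - eps * r ^+ n.-1 * derive1 (fun x => dw x / x ^+ n.-1) r
         + w r ^+ n / (n%:R * r ^+ (n * n.-1)) = Lf n f r) /\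
    w 0 = 0 /\ dw 0 = 0 /\ dw Rad = eps * Rad ^+ n.-1.

(* Main.v *)
Require Import Defs.
From HB Require Import structures.
From mathcomp Require Import all_boot all_order all_algebra.
From mathcomp Require Import all_classical all_reals all_analysis.
From mathcomp Require Import lra.
Import Order.TTheory GRing.Theory Num.Theory.
Import numFieldNormedType.Exports.
Local Open Scope classical_set_scope.
Local Open Scope ring_scope.

Lemma left_case (R : realType) (k : nat) (u g dg : R -> R) (a r0 : R) :
  0 <= a -> a < r0 ->
  (forall x, x \in `]a, r0[ -> is_derive x 1 u (x ^+ k * g x)) ->
  (forall x, x \in `]a, r0[ -> is_derive x 1 g (dg x) /\ 0 < dg x) ->
  (forall x, a < x -> x < r0 -> {within `[x, r0], continuous u}) ->
  (forall x, a < x -> x < r0 -> {within `[x, r0], continuous g}) ->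
  g r0 <= 0 ->
  forall x, x \in `]a, r0[ -> u r0 < u x.
Proof.
move=> a0 ar0 du dg' cu cg gr0 x; rewrite in_itv /= => /andP[ax xr0].
have subx : forall y, y \in `]x, r0[ -> y \in `]a, r0[.
  move=> y; rewrite !in_itv /= => /andP[xy ->]; rewrite andbT; exact: lt_trans ax xy.
have [c cI uc] := MVT xr0 (fun y yI => du y (subx y yI)) (cu _ ax xr0).
move: (cI); rewrite in_itv /= => /andP[xc cr0].
have subc : forall y, y \in `]c, r0[ -> y \in `]a, r0[.
  move=> y; rewrite !in_itv /= => /andP[cy ->]; rewrite andbT.
  exact: lt_trans ax (lt_trans xc cy).
have [e eI ge] := MVT cr0 (fun y yI => (dg' y (subc y yI)).1) (cg _ (lt_trans ax xc) cr0).
have := (dg' e (subc e eI)).2 => dge.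
have gc : g c < 0.
  apply: lt_le_trans gr0; rewrite -subr_gt0 ge; apply: mulr_gt0 => //; by rewrite subr_gt0.
rewrite -subr_lt0 uc pmulr_llt0; last by rewrite subr_gt0.
rewrite pmulr_rlt0 //; apply: exprn_gt0; exact: le_lt_trans a0 (lt_trans ax xc).
Qed.

Lemma right_case (R : realType) (k : nat) (u g dg : R -> R) (r0 b : R) :
  0 <= r0 -> r0 < b ->
  (forall x, x \in `]r0, b[ -> is_derive x 1 u (x ^+ k * g x)) ->
  (forall x, x \in `]r0, b[ -> is_derive x 1 g (dg x) /\ 0 < dg x) ->
  (forall x, r0 < x -> x < b -> {within `[r0, x], continuous u}) ->
  (forall x, r0 < x -> x < b -> {within `[r0, x], continuous g}) ->
  0 <= g r0 ->
  forall x, x \in `]r0, b[ -> u r0 < u x.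
Proof.
move=> a0 ar0 du dg' cu cg gr0 x; rewrite in_itv /= => /andP[ax xr0].
have subx : forall y, y \in `]r0, x[ -> y \in `]r0, b[.
  move=> y; rewrite !in_itv /= => /andP[-> xy]; exact: lt_trans xy xr0.
have [c cI uc] := MVT ax (fun y yI => du y (subx y yI)) (cu _ ax xr0).
move: (cI); rewrite in_itv /= => /andP[xc cr0].
have subc : forall y, y \in `]r0, c[ -> y \in `]r0, b[.
  move=> y; rewrite !in_itv /= => /andP[-> cy].
  exact: lt_trans cy (lt_trans cr0 xr0).
have [e eI ge] := MVT xc (fun y yI => (dg' y (subc y yI)).1) (cg _ xc (lt_trans cr0 xr0)).
have := (dg' e (subc e eI)).2 => dge.
have gc : 0 < g c.
  apply: le_lt_trans gr0 _; rewrite -subr_gt0 ge; apply: mulr_gt0 => //; by rewrite subr_gt0.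
rewrite -subr_gt0 uc; apply: mulr_gt0; last by rewrite subr_gt0.
apply: mulr_gt0 gc; apply: exprn_gt0; exact: le_lt_trans a0 xc.
Qed.

Lemma sol_le (R : realType) (n : nat) (Rad eps : R) (f : R -> R) (w1 w2 : R -> R) :
  (2 <= n)%N -> 0 < Rad -> 0 < eps ->
  classical_solution n eps Rad f w1 -> (forall r, r \in `[0, Rad] -> 0 <= w1 r) ->
  classical_solution n eps Rad f w2 -> (forall r, r \in `[0, Rad] -> 0 <= w2 r) ->
  forall r, r \in `[0, Rad] -> w1 r <= w2 r.
Proof.
move=> n2 Rad0 eps0 [d1 [cw1 [cd1 [D1 [_ [_ [_ [E1 [w10 [d10 d1R]]]]]]]]]] p1
  [d2 [cw2 [cd2 [D2 [_ [_ [_ [E2 [w20 [d20 d2R]]]]]]]]]] p2.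
set k := n.-1.
pose g1 := fun x => d1 x / x ^+ k.
pose g2 := fun x => d2 x / x ^+ k.
pose u := w1 - w2.
pose g := g1 - g2.
pose dg := fun x => derive1 g1 x - derive1 g2 x.
have Du : forall x, x \in `]0, Rad[ -> is_derive x 1 u (x ^+ k * g x).
  move=> x xI; have [dw1 e1] := D1 x xI; have [dw2 e2] := D2 x xI.
  have h1 : is_derive x 1 w1 (d1 x) by rewrite -e1 derive1E; exact: derivableP.
  have h2 : is_derive x 1 w2 (d2 x) by rewrite -e2 derive1E; exact: derivableP.
  apply: (is_derive_eq (is_deriveB h1 h2)).
  have xk : x ^+ k != 0.
    by apply: expf_neq0; move: xI; rewrite in_itv /= => /andP[/gt_eqF -> _].
  by rewrite /g /g1 /g2 /= mulrBr !(mulrC (x ^+ k)) !divfK.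
have Dg : forall x, x \in `]0, Rad[ -> is_derive x 1 g (dg x).
  move=> x xI; have [dg1 _] := E1 x xI; have [dg2 _] := E2 x xI.
  have h1 : is_derive x 1 g1 (derive1 g1 x) by rewrite derive1E; exact: derivableP.
  have h2 : is_derive x 1 g2 (derive1 g2 x) by rewrite derive1E; exact: derivableP.
  exact: is_deriveB h1 h2.
have Pg : forall x, x \in `]0, Rad[ -> 0 < u x -> 0 < dg x.
  move=> x xI ux; have [_ e1] := E1 x xI; have [_ e2] := E2 x xI.
  have x0 : 0 < x by move: xI; rewrite in_itv /= => /andP[].
  have x1 : x \in `[0, Rad] by move: xI; rewrite !in_itv /= => /andP[/ltW -> /ltW ->].
  have P0 : 0 < n%:R * x ^+ (n * k).
    by apply: mulr_gt0; [rewrite ltr0n (leq_trans _ n2) | exact: exprn_gt0].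
  have A : w2 x ^+ n / (n%:R * x ^+ (n * k)) < w1 x ^+ n / (n%:R * x ^+ (n * k)).
    rewrite ltr_pM2r ?invr_gt0 // ltrXn2r ?p2 //.
      by rewrite -lt0n (leq_trans _ n2).
    by rewrite -subr_gt0; exact: ux.
  have e3 : eps * x ^+ k * dg x = w1 x ^+ n / (n%:R * x ^+ (n * k)) - w2 x ^+ n / (n%:R * x ^+ (n * k)).
    rewrite /dg /g1 /g2 /= mulrBr; move: e1 e2.
    set a := derive1 _ x; set b := derive1 _ x; set A1 := _ / _; set A2 := _ / _.
    set L := Lf _ _ _; move=> e1 e2; lra.
  have : 0 < eps * x ^+ k * dg x by rewrite e3 subr_gt0.
  by rewrite pmulr_rgt0 // mulr_gt0 // exprn_gt0.
have inI : forall x, 0 < x -> x < Rad -> x \in `]0, Rad[.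
  by move=> x x0 xR; rewrite in_itv /= x0 xR.
have cu : {within `[0, Rad], continuous u} by exact: within_continuousB.
have Cu : forall x, x \in `]0, Rad[ -> {for x, continuous u}.
  move=> x xI; apply: differentiable_continuous; apply/derivable1_diffP.
  apply: ex_derive; exact: Du x xI.
have Cg : forall x, x \in `]0, Rad[ -> {for x, continuous g}.
  move=> x xI; apply: differentiable_continuous; apply/derivable1_diffP.
  apply: ex_derive; exact: Dg x xI.
have Cwg : forall x y, 0 < x -> y < Rad -> {within `[x, y], continuous g}.
  move=> x y x0 yR; apply: derivable_within_continuous => z.
  rewrite in_itv /= => /andP[xz zy].
  apply: ex_derive; apply: Dg; apply: inI; [exact: lt_le_trans x0 xz|exact: le_lt_trans zy yR].
have gR : g Rad = 0.
  by have -> : g Rad = d1 Rad / Rad ^+ k - d2 Rad / Rad ^+ k by []; rewrite d1R d2R subrr.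
have RR0 : Rad != 0 by rewrite gt_eqF.
have gL : g @ Rad^'- --> g Rad.
  have [_ _ h1] := (continuous_within_itvP _ Rad0).1 cd1.
  have [_ _ h2] := (continuous_within_itvP _ Rad0).1 cd2.
  have hx : (fun x => x ^+ k) @ Rad^'- --> Rad ^+ k.
    by apply: cvg_at_left_filter; exact: exprn_continuous.
  have hv : (fun x => (x ^+ k)^-1) @ Rad^'- --> (Rad ^+ k)^-1.
    by apply: cvgV => //; exact: expf_neq0.
  have H := cvgB (cvgM h1 hv) (cvgM h2 hv). exact: H.
have Cwg' : forall x, 0 < x -> x < Rad -> {within `[x, Rad], continuous g}.
  move=> x x0 xR; apply/(continuous_within_itvP _ xR); split.
  - move=> z; rewrite in_itv /= => /andP[xz zR]; apply: Cg; apply: inI => //.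
    exact: lt_trans x0 xz.
  - apply: cvg_at_right_filter; apply: Cg; exact: inI.
  - exact: gL.
have [r0 r0I r0max] := EVT_max (ltW Rad0) cu.
move=> r rI; rewrite leNgt; apply/negP => hr.
have ur0 : 0 < u r0.
  have h : 0 < w1 r - w2 r by rewrite subr_gt0.
  exact: lt_le_trans h (r0max r rI).
have [r0pos r0R] : 0 < r0 /\ r0 <= Rad.
  move: r0I; rewrite in_itv /= => /andP[]; rewrite le_eqVlt => /orP[/eqP e|-> ->] //.
  by move: ur0; rewrite -e; have -> : u 0 = w1 0 - w2 0 by []; rewrite w10 w20 subrr ltxx.
have inR : forall x, 0 <= x -> x <= Rad -> x \in `[0, Rad].
  by move=> x x0 xR; rewrite in_itv /= x0 xR.
have caseB : g r0 <= 0 -> u @ r0^'- --> u r0 -> False.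
  move=> gle uL.
  have H : \forall t \near r0^'-, 0 < u t by apply: (cvgr_gt (u r0) uL).
  move: H; rewrite near_withinE => H; have [e /= e0 he] := iffLR (nbhs_ballP _ _) H.
  have he' : forall t, `|r0 - t| < e -> t < r0 -> 0 < u t.
    by move=> t ht; apply: he; rewrite -ball_normE.
  set a := Num.max 0 (r0 - e).
  have a0 : 0 <= a by rewrite le_max lexx.
  have ar0 : a < r0 by rewrite gt_max r0pos /=; lra.
  have ae : r0 - e <= a by rewrite le_max lexx orbT.
  have inb : forall x, x \in `]a, r0[ -> (x \in `]0, Rad[) /\ 0 < u x.
    move=> x; rewrite in_itv /= => /andP[ax xr0]; split.
      apply: inI; [exact: le_lt_trans a0 ax|exact: lt_le_trans xr0 r0R].
    apply: he' => //; rewrite ltr_norml; apply/andP; split; lra.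
  have [m1 m2] := midf_lt ar0.
  have hlt := @left_case R k u g dg a r0 a0 ar0
    (fun x xI => Du x (inb x xI).1)
    (fun x xI => conj (Dg x (inb x xI).1) (Pg x (inb x xI).1 (inb x xI).2)).
  have hle : u ((a + r0) / 2) <= u r0 by apply: r0max; apply: inR; lra.
  move: hle; rewrite leNgt hlt //.
  + move=> x ax xr0; apply: continuous_subspaceW cu => y /=.
    rewrite !in_itv /= => /andP[r0y yx]; apply/andP; split; lra.
  + move=> x ax xr0; have x0 : 0 < x by exact: le_lt_trans a0 ax.
    apply: continuous_subspaceW (Cwg' x x0 (lt_le_trans xr0 r0R)) => y /=.
    rewrite !in_itv /= => /andP[r0y yx]; apply/andP; split; lra.
  + by rewrite in_itv /= m1 m2.
case: (ltP r0 Rad) => [r0lt|Rr0]; first case: (leP 0 (g r0)) => [gpos|gneg].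
- have H : \forall t \near r0, 0 < u t.
    by apply: (cvgr_gt (u r0) (Cu r0 (inI _ r0pos r0lt))).
  have := iffLR (nbhs_ballP _ _) H; move=> [e /= e0 he].
  have he' : forall t, `|r0 - t| < e -> 0 < u t.
    by move=> t ht; apply: he; rewrite -ball_normE.
  set b := Num.min (r0 + e) Rad.
  have r0b : r0 < b by rewrite lt_min ltrDl e0 r0lt.
  have bR : b <= Rad by rewrite ge_min lexx orbT.
  have be : b <= r0 + e by rewrite ge_min lexx.
  have inb : forall x, x \in `]r0, b[ -> (x \in `]0, Rad[) /\ 0 < u x.
    move=> x; rewrite in_itv /= => /andP[r0x xb]; split.
      apply: inI; [exact: lt_trans r0pos r0x|exact: lt_le_trans xb bR].
    apply: he'; rewrite ltr_norml; apply/andP; split; lra.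
  have [m1 m2] := midf_lt r0b.
  have hlt := @right_case R k u g dg r0 b (ltW r0pos) r0b
    (fun x xI => Du x (inb x xI).1)
    (fun x xI => conj (Dg x (inb x xI).1) (Pg x (inb x xI).1 (inb x xI).2)).
  have hle : u ((r0 + b) / 2) <= u r0 by apply: r0max; apply: inR; lra.
  move: hle; rewrite leNgt hlt //.
  + move=> x r0x xb; apply: continuous_subspaceW cu => y /=.
    rewrite !in_itv /= => /andP[r0y yx]; apply/andP; split; lra.
  + move=> x r0x xb; apply: Cwg => //; exact: lt_le_trans xb bR.
  + by rewrite in_itv /= m1 m2.
- exact: caseB (ltW gneg) (cvg_at_left_filter (Cu r0 (inI _ r0pos r0lt))).
- have e : r0 = Rad by apply: le_anti; rewrite r0R Rr0.
  apply: caseB; first by rewrite e gR.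
  have [_ _ h] := (continuous_within_itvP _ Rad0).1 cu.
  by rewrite e.
Qed.

Theorem theorem3p3 (R : realType) (n : nat) (Rad eps : R) (f : R -> R) :
  (2 <= n)%N -> 0 < Rad -> 0 < eps ->
  (@lebesgue_measure R).-integrable `]0, Rad[ (fun t => (t ^+ n.-1 * f t)%:E) ->
  forall w1 w2 : R -> R,
    classical_solution n eps Rad f w1 -> (forall r, r \in `[0, Rad] -> 0 <= w1 r) ->
    classical_solution n eps Rad f w2 -> (forall r, r \in `[0, Rad] -> 0 <= w2 r) ->
    forall r, r \in `[0, Rad] -> w1 r = w2 r.
Proof.
move=> n2 Rad0 eps0 _ w1 w2 s1 p1 s2 p2 r rI.
by apply: le_anti; rewrite (@sol_le R n Rad eps f w1 w2 n2 Rad0 eps0 s1 p1 s2 p2 r rI) (@sol_le R n Rad eps f w2 w1 n2 Rad0 eps0 s2 p2 s1 p1 r rI).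
Qed.
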